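(* Let $a,b,c,d,e,f\in[0,1]$ and set $Q_3=2abef+2acdf+2bcde+2abd+2ace+2bcf+2def+a^2+b^2+c^2+d^2+e^2+f^2-a^2f^2-b^2e^2-c^2d^2-1$, $A_i=d^2+e^2+f^2+2def-1$, $A_j=b^2+c^2+f^2+2bcf-1$, $A_k=a^2+c^2+e^2+2ace-1$, $A_h=a^2+b^2+d^2+2abd-1$. If $A_\nu\ge 0$ for at least one $\nu\in\{i,j,k,h\}$, then $Q_3\ge0$. In particular, if $A_\nu>0$ for some $\nu$, then $Q_3>0$.
   Context: In the paper $a,\dots,f$ are the cosines $\cos\Phi_{ij},\cos\Phi_{ik},\cos\Phi_{ih},\cos\Phi_{jk},\cos\Phi_{jh},\cos\Phi_{kh}$ of edge weights $\Phi\in[0,\frac{\pi}{2}]$ on a truncated tetrahedron $\{ijkh\}$. *)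

(* Defs.v *)
From Stdlib Require Import Reals.
Open Scope R_scope.

Definition Q3 (a b c d e f : R) : R :=
  2*a*b*e*f + 2*a*c*d*f + 2*b*c*d*e + 2*a*b*d + 2*a*c*e + 2*b*c*f + 2*d*e*f
  + a^2 + b^2 + c^2 + d^2 + e^2 + f^2 - a^2*f^2 - b^2*e^2 - c^2*d^2 - 1.

Definition A_i (a b c d e f : R) : R := d^2 + e^2 + f^2 + 2*d*e*f - 1.
Definition A_j (a b c d e f : R) : R := b^2 + c^2 + f^2 + 2*b*c*f - 1.
Definition A_k (a b c d e f : R) : R := a^2 + c^2 + e^2 + 2*a*c*e - 1.
Definition A_h (a b c d e f : R) : R := a^2 + b^2 + d^2 + 2*a*b*d - 1.

(* Main.v *)
Require Import Defs.
From Stdlib Require Import Reals Lra Psatz.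
Open Scope R_scope.

Lemma sq1 (x y : R) : 0 <= x <= 1 -> 0 <= y <= 1 -> 0 <= x^2 * (1 - y^2).
Proof. intros. apply Rmult_le_pos; nra. Qed.

Ltac pos := repeat (first [apply sq1; assumption | apply Rplus_le_le_0_compat | apply Rmult_le_pos | lra]).

Lemma Q3_ge_all (a b c d e f : R)
  (ha : 0 <= a <= 1) (hb : 0 <= b <= 1) (hc : 0 <= c <= 1)
  (hd : 0 <= d <= 1) (he : 0 <= e <= 1) (hf : 0 <= f <= 1) :
  A_i a b c d e f <= Q3 a b c d e f /\ A_j a b c d e f <= Q3 a b c d e f /\
  A_k a b c d e f <= Q3 a b c d e f /\ A_h a b c d e f <= Q3 a b c d e f.
Proof.
  unfold A_i, A_j, A_k, A_h, Q3; repeat split; apply (fun x y (H : 0 <= y - x) => Rge_le _ _ (Rminus_ge _ _ (Rle_ge _ _ H))).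
  - match goal with |- 0 <= ?X => replace X with
      (a^2*(1-f^2)+b^2*(1-e^2)+c^2*(1-d^2) + 2*a*b*e*f+2*a*c*d*f+2*b*c*d*e+2*a*b*d+2*a*c*e+2*b*c*f) by ring end; pos.
  - match goal with |- 0 <= ?X => replace X with
      (a^2*(1-f^2)+e^2*(1-b^2)+d^2*(1-c^2) + 2*a*b*e*f+2*a*c*d*f+2*b*c*d*e+2*a*b*d+2*a*c*e+2*d*e*f) by ring end; pos.
  - match goal with |- 0 <= ?X => replace X with
      (f^2*(1-a^2)+b^2*(1-e^2)+d^2*(1-c^2) + 2*a*b*e*f+2*a*c*d*f+2*b*c*d*e+2*a*b*d+2*b*c*f+2*d*e*f) by ring end; pos.
  - match goal with |- 0 <= ?X => replace X with
      (f^2*(1-a^2)+e^2*(1-b^2)+c^2*(1-d^2) + 2*a*b*e*f+2*a*c*d*f+2*b*c*d*e+2*a*c*e+2*b*c*f+2*d*e*f) by ring end; pos.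
Qed.

Theorem lemma2p3 (a b c d e f : R)
  (ha : 0 <= a <= 1) (hb : 0 <= b <= 1) (hc : 0 <= c <= 1)
  (hd : 0 <= d <= 1) (he : 0 <= e <= 1) (hf : 0 <= f <= 1) :
  ((0 <= A_i a b c d e f \/ 0 <= A_j a b c d e f \/
    0 <= A_k a b c d e f \/ 0 <= A_h a b c d e f) -> 0 <= Q3 a b c d e f) /\
  ((0 < A_i a b c d e f \/ 0 < A_j a b c d e f \/
    0 < A_k a b c d e f \/ 0 < A_h a b c d e f) -> 0 < Q3 a b c d e f).
Proof.
  destruct (Q3_ge_all a b c d e f ha hb hc hd he hf) as (H1 & H2 & H3 & H4).
  split; intros H; lra.
Qed.
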